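(* Let $X$ be a finite rack. Then every irreducible strong representation of $X$ is either trivial (the zero representation) or finite-dimensional.
   Context: A rack is a set $X$ with a binary operation $\rhd$ such that each map $x\mapsto x\rhd y$ is bijective and $(x\rhd y)\rhd z=(x\rhd z)\rhd(y\rhd z)$. A stabilizing family of $X$ is a finite family $(u_1,\ldots,u_n)$ in $X$ with $(\cdots(x\rhd u_1)\cdots)\rhd u_n=x$ for all $x\in X$. A representation of $X$ is a complex vector space $V$ with a map $\pi:X\to GL(V)$ such that $\pi_{x\rhd y}=\pi_y\pi_x\pi_y^{-1}$ for all $x,y$. It is strong if for every stabilizing family $(u_1,\ldots,u_n)$ one has $\pi_{u_n}\cdots\pi_{u_1}=\mathrm{id}_V$. A subrepresentation is a subspace invariant under all $\pi_x$; the representation is irreducible if its only subrepresentations are $\{0\}$ and $V$. *)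

(* Defs.v *)
From mathcomp Require Import all_boot all_algebra.
From mathcomp Require Import complex.
From mathcomp Require Import Rstruct.

Set Implicit Arguments.
Unset Strict Implicit.
Unset Printing Implicit Defensive.
Import GRing.Theory.
Local Open Scope ring_scope.

Notation CC := (Rdefinitions.R)[i].

Section Racks.
Variable X : Type.
Variable op : X -> X -> X.   (* x |> y := op x y *)

Definition is_rack : Prop :=
  (forall y, bijective (fun x => op x y)) /\
  (forall x y z, op (op x y) z = op (op x z) (op y z)).

Definition stabilizing (u : seq X) : Prop :=
  forall x, foldl op x u = x.
End Racks.

Section Reps.
Variables (X : Type) (op : X -> X -> X) (V : lmodType CC).

(* pi x is an element of GL(V): a linear map with a two-sided inverse
   pinv x, which is then linear as well. *)
Definition in_GL (f g : V -> V) : Prop :=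
  linear f /\ cancel f g /\ cancel g f.

Definition is_rack_rep (pi pinv : X -> V -> V) : Prop :=
  (forall x, in_GL (pi x) (pinv x)) /\
  (forall x y, pi (op x y) =1 pi y \o pi x \o pinv y).

(* pi_{u_n} ... pi_{u_1} *)
Definition rep_prod (pi : X -> V -> V) (u : seq X) : V -> V :=
  foldl (fun f a => pi a \o f) id u.

Definition is_strong (pi : X -> V -> V) : Prop :=
  forall u : seq X, stabilizing op u -> rep_prod pi u =1 id.

Definition is_subspace (W : V -> Prop) : Prop :=
  W 0 /\ (forall v w, W v -> W w -> W (v + w)) /\
  (forall (c : CC) v, W v -> W (c *: v)).

Definition is_subrep (pi : X -> V -> V) (W : V -> Prop) : Prop :=
  is_subspace W /\ (forall x v, W v -> W (pi x v)).

Definition is_irreducible (pi : X -> V -> V) : Prop :=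
  forall W, is_subrep pi W ->
    (forall v, W v <-> v = 0) \/ (forall v, W v).

Definition is_zero_space : Prop := forall v : V, v = 0.

Definition finite_dim : Prop :=
  exists (n : nat) (b : 'I_n -> V),
    forall v : V, exists c : 'I_n -> CC, v = \sum_(i < n) c i *: b i.
End Reps.

(* Main.v *)
Require Import Defs.
From mathcomp Require Import all_boot all_algebra.
From mathcomp Require Import complex.
From mathcomp Require Import Rstruct.
From mathcomp Require Import fingroup perm.
From Stdlib Require Import ClassicalEpsilon Classical.

Set Implicit Arguments.
Unset Strict Implicit.
Unset Printing Implicit Defensive.
Import GRing.Theory.
Local Open Scope ring_scope.

Section Aux.
Variable X : finType.
Variable op : X -> X -> X.
Variable V : lmodType CC.
Variable pi : X -> V -> V.

Definition sg (u : seq X) (x : X) := foldl op x u.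

Lemma sg_cat a b x : sg (a ++ b) x = sg b (sg a x).
Proof. by rewrite /sg foldl_cat. Qed.

Lemma rp_gen (b : seq X) (f : V -> V) :
  foldl (fun f a => pi a \o f) f b =1 rep_prod pi b \o f.
Proof.
rewrite /rep_prod; elim: b f => [|y b IH] f v //=.
by rewrite IH /= (IH (pi y \o id)).
Qed.

Lemma rp_cat a b v : rep_prod pi (a ++ b) v = rep_prod pi b (rep_prod pi a v).
Proof. by rewrite {1}/rep_prod foldl_cat rp_gen. Qed.

Definition pw k (u : seq X) := flatten (nseq k u).

Lemma sg_pw k u x : sg (pw k u) x = iter k (sg u) x.
Proof.
elim: k x => [|k IH] x //=.
by rewrite /pw /= sg_cat -/(pw k u) IH -iterSr.
Qed.

Hypothesis Hbij : forall y, bijective (fun x => op x y).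

Lemma sg_inj u : injective (sg u).
Proof.
elim: u => [|y u IH] x1 x2 //= H.
have := IH _ _ H.
exact: (bij_inj (Hbij y)).
Qed.

Lemma sg_order u : exists k, sg (pw k.+1 u) =1 id.
Proof.
pose p := perm (@sg_inj u).
exists (#[p]%g).-1 => x.
rewrite sg_pw prednK ?order_gt0 //.
have := permX p x #[p]%g. rewrite expg_order perm1 => H.
rewrite {2}H; apply: eq_iter => y. by rewrite permE.
Qed.

Hypothesis Hstrong : is_strong op pi.

Lemma sameP u w : sg w =1 sg u -> forall v, rep_prod pi w v = rep_prod pi u v.
Proof.
move=> Hwu v.
have [k Hk] := sg_order u.
have S1 : stabilizing op (w ++ pw k u).
  move=> x; rewrite -/(sg _ x) sg_cat Hwu -sg_cat.
  exact: Hk.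
have S2 : stabilizing op (pw k u ++ u).
  move=> x; rewrite -/(sg _ x) sg_cat !sg_pw -iterS -sg_pw. exact: Hk.
have E1 := Hstrong S1 v. have E2 := Hstrong S2 (rep_prod pi w v).
rewrite rp_cat in E1. rewrite rp_cat E1 in E2. by rewrite -E2.
Qed.

End Aux.

Theorem mainTheorem4 (X : finType) (op : X -> X -> X) (Hrack : is_rack op)
  (V : lmodType CC) (pi pinv : X -> V -> V)
  (Hrep : is_rack_rep op pi pinv) (Hstrong : is_strong op pi)
  (Hirr : is_irreducible pi) :
  is_zero_space V \/ finite_dim V.
Proof.
case: (classic (is_zero_space V)) => [|Hnz]; [by left|right].
have [v Hv] := not_all_ex_not _ _ Hnz.
have Hbij := proj1 Hrack.
pose word (f : {ffun X -> X}) : seq X :=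
  epsilon (inhabits [::]) (fun u => finfun (sg op u) = f).
have wordP u : sg op (word (finfun (sg op u))) =1 sg op u.
  move=> x.
  have := epsilon_spec (inhabits [::]) (fun u' => finfun (sg op u') = finfun (sg op u)) (ex_intro _ u erefl).
  by move=> /(congr1 (fun f : {ffun X -> X} => f x)); rewrite !ffunE.
pose n := #|{ffun X -> X}|.
pose b (i : 'I_n) := rep_prod pi (word (enum_val i)) v.
have bP u : exists i, rep_prod pi u v = b i.
  exists (enum_rank (finfun (sg op u))).
  by rewrite /b enum_rankK; symmetry; apply: sameP => //; apply: wordP.
pose W (w : V) := exists c : 'I_n -> CC, w = \sum_(i < n) c i *: b i.
have W0 : W 0 by exists (fun _ => 0); rewrite big1 // => i _; rewrite scale0r.
have WD : forall w1 w2, W w1 -> W w2 -> W (w1 + w2).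
  move=> w1 w2 [c1 ->] [c2 ->]; exists (fun i => c1 i + c2 i).
  by rewrite -big_split /=; apply: eq_bigr => i _; rewrite scalerDl.
have WZ : forall (c : CC) w, W w -> W (c *: w).
  move=> c w [c1 ->]; exists (fun i => c * c1 i).
  by rewrite scaler_sumr; apply: eq_bigr => i _; rewrite scalerA.
have Wb : forall i, W (b i).
  move=> i; exists (fun j => if j == i then 1 else 0).
  rewrite (bigD1 i) //= eqxx scale1r big1 ?addr0 // => j /negbTE ->.
  by rewrite scale0r.
have Wsub : is_subrep pi W.
  split; first by split; [|split].
  move=> x w [c ->].
  have [Hlin _] := (proj1 Hrep) x.
  have Hadd : {morph pi x : a b / a + b}.
    by move=> a1 a2; have := Hlin 1 a1 a2; rewrite !scale1r.
  have H0 : pi x 0 = 0.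
    have := Hadd 0 0; rewrite addr0 => /(congr1 (fun z => z - pi x 0)).
    by rewrite subrr addrK.
  rewrite (big_morph (pi x) Hadd H0).
  apply: (big_ind W) => // i _.
  have -> : pi x (c i *: b i) = c i *: pi x (b i).
    by have := Hlin (c i) (b i) 0; rewrite !addr0 H0 addr0.
  apply: WZ.
  have [j Hj] := bP (word (enum_val i) ++ [:: x]).
  rewrite rp_cat in Hj.
  have -> : pi x (b i) = b j by rewrite -Hj; rewrite {2}/rep_prod /=.
  exact: Wb.
case: (Hirr W Wsub) => [H|H].
  exfalso; apply: Hv; apply/H.
  have [j Hj] := bP [::].
  have -> : v = b j by rewrite -Hj.
  exact: Wb.
by exists n, b => w; apply: H.
Qed.
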